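(* Let $X$ be a Banach lattice of (equivalence classes of) real valued functions on a $\sigma$-finite measure space $(\Omega,\Sigma,\mu)$, with $X\subseteq L_1+L_\infty$, and let $T:X\to X$ be a linear operator which is semi band preserving. Let $\Sigma_T=\{A\subseteq\Omega:\ \exists f\in X \text{ with } \operatorname{supp}(Tf)=A\}$ and $S_T=\bigcup_{A\in\Sigma_T}A$. Then for every $f\in X$ with $\operatorname{supp} f\subseteq\Omega\setminus S_T$ we have $Tf=0$.
   Context: For $f,g\in X$, $f\perp g$ means $|f|\wedge|g|=0$ (i.e. the supports are disjoint). A linear operator $T$ on $X$ is semi band preserving if for all $f,g\in X$: $f\perp Tg$ implies $Tf\perp Tg$. $\operatorname{supp} f$ is the minimal set outside of which $f=0$ a.e.; all set relations are modulo null sets. *)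

(* Defs.v *)
From HB Require Import structures.
From mathcomp Require Import all_boot all_order all_algebra.
From mathcomp Require Import all_classical all_reals all_analysis.
Set Implicit Arguments. Unset Strict Implicit. Unset Printing Implicit Defensive.
Import Order.TTheory GRing.Theory Num.Theory.
Import numFieldNormedType.Exports.
Local Open Scope classical_set_scope.
Local Open Scope ring_scope.

Section BanachFunctionLattice.
Context {d : measure_display} {Om : measurableType d} {R : realType}.
Variable mu : {measure set Om -> \bar R}.

Definition aeeq (f g : Om -> R) : Prop := {ae mu, forall x, f x = g x}.

Definition disj (f g : Om -> R) : Prop :=
  {ae mu, forall x, Num.min `|f x| `|g x| = 0}.

(* support of (a representative of) f; only meaningful modulo null sets *)
Definition supp (f : Om -> R) : set Om := [set x | f x != 0].

Definition ae_subset (A B : set Om) : Prop := mu.-negligible (A `\` B).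
Definition ae_seteq (A B : set Om) : Prop := ae_subset A B /\ ae_subset B A.

(* X is a Banach lattice of (classes of) real functions on (Om, mu),
   represented by the set of all its representatives, with lattice norm nrm *)
Record banach_function_lattice (X : set (Om -> R)) (nrm : (Om -> R) -> R) : Prop := {
  bfl_meas : forall f, X f -> measurable_fun setT f;
  bfl_aeeq : forall f g, X f -> measurable_fun setT g -> aeeq f g -> X g;
  bfl_zero : X (fun _ => 0);
  bfl_add : forall f g, X f -> X g -> X (f \+ g);
  bfl_scale : forall (k : R) f, X f -> X (fun x => k * f x);
  bfl_abs : forall f, X f -> X (fun x => `|f x|);
  bfl_nrm_ge0 : forall f, X f -> 0 <= nrm f;
  bfl_nrm_eq0 : forall f, X f -> (nrm f = 0 <-> aeeq f (fun _ => 0));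
  bfl_nrm_tri : forall f g, X f -> X g -> nrm (f \+ g) <= nrm f + nrm g;
  bfl_nrm_scale : forall (k : R) f, X f -> nrm (fun x => k * f x) = `|k| * nrm f;
  bfl_nrm_lattice : forall f g, X f -> X g ->
      {ae mu, forall x, `|f x| <= `|g x|} -> nrm f <= nrm g;
  bfl_complete : forall u : nat -> (Om -> R), (forall n, X (u n)) ->
      (forall e : R, 0 < e -> exists N : nat, forall m n : nat,
          (N <= m)%N -> (N <= n)%N -> nrm (fun x => u m x - u n x) < e) ->
      exists2 f, X f & (fun n => nrm (fun x => u n x - f x)) @ \oo --> 0
}.

Definition in_L1_plus_Linf (X : set (Om -> R)) : Prop :=
  forall f, X f -> exists g h : Om -> R,
    [/\ mu.-integrable setT (fun x => (g x)%:E),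
        measurable_fun setT h,
        (exists M : R, {ae mu, forall x, `|h x| <= M}) &
        aeeq f (g \+ h)].

Definition linear_op_on (X : set (Om -> R)) (T : (Om -> R) -> (Om -> R)) : Prop :=
  [/\ forall f, X f -> X (T f),
      forall f g, X f -> X g -> aeeq f g -> aeeq (T f) (T g),
      forall f g, X f -> X g -> aeeq (T (f \+ g)) (T f \+ T g) &
      forall (k : R) f, X f -> aeeq (T (fun x => k * f x)) (fun x => k * T f x)].

Definition semi_band_preserving (X : set (Om -> R)) (T : (Om -> R) -> (Om -> R)) : Prop :=
  forall f g, X f -> X g -> disj f (T g) -> disj (T f) (T g).

Definition SigmaT (X : set (Om -> R)) (T : (Om -> R) -> (Om -> R)) : set (set Om) :=
  [set A | exists2 f, X f & ae_seteq (supp (T f)) A].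

(* S is (a representative of) the union of the family F, modulo null sets,
   i.e. its essential union: the least measurable set (mod null sets)
   containing every member of F (mod null sets). *)
Definition is_ess_union (F : set (set Om)) (S : set Om) : Prop :=
  [/\ measurable S,
      forall A, F A -> ae_subset A S &
      forall S', measurable S' -> (forall A, F A -> ae_subset A S') -> ae_subset S S'].

End BanachFunctionLattice.

(* Main.v *)
Require Import Defs.
From HB Require Import structures.
From mathcomp Require Import all_boot all_order all_algebra.
From mathcomp Require Import all_classical all_reals all_analysis.
Import Order.TTheory GRing.Theory Num.Theory.
Local Open Scope classical_set_scope.
Local Open Scope ring_scope.

Theorem proposition4p2 (d : measure_display) (Om : measurableType d) (R : realType)
  (mu : {measure set Om -> \bar R}) (X : set (Om -> R)) (nrm : (Om -> R) -> R)
  (T : (Om -> R) -> (Om -> R)) :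
  sigma_finite setT mu ->
  banach_function_lattice mu X nrm ->
  in_L1_plus_Linf mu X ->
  linear_op_on mu X T ->
  semi_band_preserving mu X T ->
  forall ST : set Om, is_ess_union mu (SigmaT mu X T) ST ->
  forall f, X f -> ae_subset mu (supp f) (~` ST) ->
  aeeq mu (T f) (fun _ => 0).
Proof.
move=> _ _ _ _ sbp ST [_ HS _] f Xf Hf.
have H2 : ae_subset mu (supp (T f)) ST.
  apply: HS; exists f => //; split; rewrite /ae_subset setDv; exact: negligible_set0.
have Hd : disj mu f (T f).
  rewrite /disj; apply: (negligibleS _ (negligibleU Hf H2)).
  move=> x /= Hx.
  have [fx0|fx0] := eqVneq (f x) 0.
    by exfalso; apply: Hx; rewrite fx0 normr0 minEle normr_ge0.
  have [tx0|tx0] := eqVneq (T f x) 0.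
    by exfalso; apply: Hx; rewrite tx0 normr0 minEle normr_le0 (negbTE fx0).
  have [xS|xS] := pselect (ST x).
    by left; split => //; move=> /(_ xS).
  by right; split.
have := sbp f f Xf Xf Hd.
rewrite /disj /aeeq => H; apply: (negligibleS _ H) => x /= Hx Hm; apply: Hx.
by move: Hm; rewrite minxx => /eqP; rewrite normr_eq0 => /eqP.
Qed.
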